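(* Let $W$ be a stopping time in $\mathcal{T}$ and let $0<\rho<1$. If $Cap_{\mathcal{T}}W\le(1-\rho)^2/4$, then $Cap_{\mathcal{T}}\big(\widehat{W_{\mathcal{T}}^{\rho}},W\big)\le\frac{4}{(1-\rho)^2}Cap_{\mathcal{T}}W$.
   Context: Tree. $\mathcal{T}$ is the rooted dyadic tree whose vertices are the dyadic arcs of the unit circle. The root $o$ is the whole circle. The vertices at level $n\ge0$ are the arcs $\{e^{it}:2\pi j2^{-n}\le t<2\pi(j+1)2^{-n}\}$ for $0\le j<2^n$. Each vertex $x$ has two children, which are the two arcs at the next level contained in it. Write $y\le x$ if $x$ lies in the subtree rooted at $y$, and $y<x$ if moreover $y\ne x$. $[o,x]=\{y:y\le x\}$ and $S(x)=\{y:y\ge x\}$. A stopping time is a set of pairwise incomparable vertices. $\mathcal{G}(\{o\},W)$ is the union of the geodesics $[o,w]$, $w\in W$. Capacity. For $f:\mathcal{T}\to\mathbb{R}$ put $If(x)=\sum_{y\in[o,x]}f(y)$, and define $Cap_{\mathcal{T}}(W)=\inf\{\|f\|^2_{\ell^2(\mathcal{T})}:If\ge1\text{ on }W\}$. For stopping times $E,F$, the condenser capacity is $Cap_{\mathcal{T}}(E,F)=\inf\{\|f\|_{\ell^2(\mathcal{T})}^2: If\ge1\text{ on }F,\ \operatorname{supp}f\subset\bigcup_{e\in E}S(e)\}$. Capacitary blowup. For a stopping time $W$ there is a unique minimizer $h$ of $Cap_{\mathcal{T}}(W)$; set $H=Ih$, so $H=1$ on $W$ and $\|h\|^2=Cap_{\mathcal{T}}W$.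 For $0<\rho<1$, the capacitary blowup is $\widehat{W_{\mathcal{T}}^{\rho}}=\{t\in\mathcal{G}(\{o\},W):H(t)\ge\rho\text{ and }H(x)\le\rho\text{ for all }x<t\}$. *)

(* Defs.v *)
From HB Require Import structures.
From mathcomp Require Import all_boot all_order all_algebra.
From mathcomp Require Import all_classical all_reals.
From mathcomp Require Import ereal esum.
Set Implicit Arguments. Unset Strict Implicit. Unset Printing Implicit Defensive.
Import Order.TTheory GRing.Theory Num.Theory.
Local Open Scope classical_set_scope.
Local Open Scope ring_scope.

(* Vertices of the dyadic tree: the dyadic arc at level n with index j is
   encoded by the binary word of length n (most significant bit first) of j;
   the root o is the empty word, the children of x are rcons x false/true.
   y <= x (x lies in the subtree rooted at y) iff y is a prefix of x. *)
Definition vertex := seq bool.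
Definition root : vertex := [::].
Definition tle (y x : vertex) : bool := prefix y x.
Definition tlt (y x : vertex) : bool := prefix y x && (y != x).

Definition stopping_time (W : set vertex) : Prop :=
  forall x y, W x -> W y -> x != y -> ~~ tle x y.

Section Cap.
Variable R : realType.

Definition sqnorm (f : vertex -> R) : \bar R :=
  (\esum_(x in [set: vertex]) ((f x) ^+ 2)%:E)%E.

Definition Iop (f : vertex -> R) (x : vertex) : R :=
  \sum_(k < (size x).+1) f (take k x).

Definition Cap (W : set vertex) : \bar R :=
  ereal_inf [set sqnorm f | f in [set f | forall w, W w -> 1 <= Iop f w]].

Definition condenser_cap (E F : set vertex) : \bar R :=
  ereal_inf [set sqnorm f | f in
    [set f | (forall w, F w -> 1 <= Iop f w) /\
             (forall y, f y != 0 -> exists2 e, E e & tle e y)]].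

Definition cap_minimizer (W : set vertex) (h : vertex -> R) : Prop :=
  (forall w, W w -> 1 <= Iop h w) /\ sqnorm h = Cap W.

Definition geodesics (W : set vertex) : set vertex :=
  [set t | exists2 w, W w & tle t w].

Definition blowup (W : set vertex) (h : vertex -> R) (rho : R) : set vertex :=
  [set t | geodesics W t /\ rho <= Iop h t /\
           (forall x, tlt x t -> Iop h x <= rho)].
End Cap.

(* Main.v *)
Require Import Defs.
From HB Require Import structures.
From mathcomp Require Import all_boot all_order all_algebra.
From mathcomp Require Import all_classical all_reals.
From mathcomp Require Import ereal esum.
Import Order.TTheory GRing.Theory Num.Theory.
Local Open Scope classical_set_scope.
Local Open Scope ring_scope.

Lemma esum_pZl (R : realType) (T : choiceType) (S : set T) (r : R) (a : T -> \bar R) :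
  0 < r -> (forall x, (0 <= a x)%E) ->
  (\esum_(i in S) (r%:E * a i) = r%:E * \esum_(i in S) a i)%E.
Proof.
move=> r0 a0; rewrite /esum -ereal_sup_pZl //; congr ereal_sup.
apply/seteqP; split => y.
- move=> [A HA <-]; exists (\sum_(x \in A) a x)%E; first by exists A.
  by case: HA => finA _; rewrite !fsbig_finite // ge0_sume_distrr.
- move=> [x [A HA <-] <-]; exists A => //.
  by case: HA => finA _; rewrite !fsbig_finite // ge0_sume_distrr.
Qed.

Lemma Iop_take (R : realType) (f : vertex -> R) (w : vertex) k : (k <= size w)%N ->
  Iop f (take k w) = \sum_(0 <= j < k.+1) f (take j w).
Proof.
move=> kw; rewrite /Iop size_take_min (minn_idPl kw) big_mkord.
apply: eq_bigr => i _; rewrite -take_min (minn_idPl _) //.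
by have := ltn_ord i; rewrite ltnS.
Qed.

Theorem mainTheorem4 (R : realType) (W : set vertex) (rho : R)
  (h : vertex -> R) :
  stopping_time W -> 0 < rho < 1 ->
  cap_minimizer W h ->
  (Cap R W <= ((1 - rho) ^+ 2 / 4)%:E)%E ->
  (condenser_cap R (blowup W h rho) W <= (4 / (1 - rho) ^+ 2)%:E * Cap R W)%E.
Proof.
move=> _ /andP[rho0 rho1] [hW hcap] _.
set c := 1 - rho.
have c0 : 0 < c by rewrite subr_gt0.
pose S := fun y : vertex => exists2 e, blowup W h rho e & tle e y.
pose g := fun y => if `[< S y >] then h y / c else 0.
have key : forall w, W w -> 1 <= Iop g w.
  move=> w Ww.
  have hw := hW w Ww.
  pose P := fun j => (j <= size w)%N && (rho <= Iop h (take j w)).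
  have exP : exists j, P j.
    exists (size w); rewrite /P leqnn take_size /=.
    by apply: le_trans hw; apply: ltW.
  case: (ex_minnP exP) => k /andP[kw Pk] kmin.
  have notP : forall j, (j < k)%N -> (j <= size w)%N -> Iop h (take j w) < rho.
    move=> j jk jw; rewrite ltNge; apply/negP => Hj.
    by have := kmin j; rewrite /P jw Hj => /(_ isT); rewrite leqNgt jk.
  have g0 : forall j, (j < k)%N -> g (take j w) = 0.
    move=> j jk; rewrite /g; case: asboolP => // -[e [_ [He _]] /prefixP [s' Hs]].
    have se : (size e <= j)%N.
      have : size (take j w) = (size e + size s')%N by rewrite Hs size_cat.
      rewrite size_take_min => E; apply: leq_trans (geq_minl j (size w)).
      by rewrite E leq_addr.
    have ee : e = take (size e) w.
      by rewrite -(minn_idPl se) take_min Hs take_size_cat.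
    have := notP (size e) (leq_ltn_trans se jk) (leq_trans se (leq_trans (ltnW jk) kw)).
    by rewrite -ee ltNge He.
  have Bt : blowup W h rho (take k w).
    split; first by exists w => //; exact: prefix_take.
    split => // x /andP[/prefixP [s' Hs] xne].
    have sx : (size x < k)%N.
      have : size (take k w) = (size x + size s')%N by rewrite Hs size_cat.
      rewrite size_take_min (minn_idPl kw) => E; rewrite E -[X in (X < _)%N]addn0 ltn_add2l lt0n.
      apply/negP => /eqP/size0nil s0; move: Hs xne; rewrite s0 cats0 => ->.
      by rewrite eqxx.
    have xe : x = take (size x) w.
      by rewrite -(minn_idPl (ltnW sx)) take_min Hs take_size_cat.
    by rewrite xe; apply: ltW; apply: notP sx (leq_trans (ltnW sx) kw).
  have g1 : forall j, (k <= j)%N -> (j <= size w)%N -> g (take j w) = h (take j w) / c.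
    move=> j kj jw; rewrite /g; case: asboolP => // nS; exfalso; apply: nS.
    exists (take k w) => //; rewrite /tle.
    by rewrite -(minn_idPl kj) take_min prefix_take.
  have Ig : Iop g w = \sum_(k <= j < (size w).+1) h (take j w) / c.
    rewrite /Iop -(big_mkord xpredT (fun j => g (take j w))) (big_cat_nat _ (n:=k)) //=; last by apply: leqW.
    rewrite big_nat big1 ?add0r; last by move=> j /andP[_ jk]; rewrite g0.
    rewrite !big_nat; apply: eq_bigr => j /andP[kj jw]; rewrite g1 //.
  have Ih : Iop h w = \sum_(0 <= j < k) h (take j w) + \sum_(k <= j < (size w).+1) h (take j w).
    by rewrite /Iop -(big_mkord xpredT (fun j => h (take j w))) (big_cat_nat _ (n:=k)) //; apply: leqW.
  have A : \sum_(0 <= j < k) h (take j w) <= rho.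
    case: k kw Pk kmin notP {g0 Bt g1 Ig Ih} => [|k] kw _ _ notP.
      by rewrite big_geq // ltW.
    by rewrite -(@Iop_take R h w k (ltnW kw)); apply: ltW; apply: notP (ltnSn k) (ltnW kw).
  rewrite Ig -big_distrl /= ler_pdivlMr // mul1r.
  move: Ih; set B := \sum_(k <= j < _) _ => Ih.
  rewrite /c; move: hw; rewrite Ih => hw.
  by rewrite lerBlDr; apply: le_trans hw _; rewrite addrC lerD2l.
have gS : forall y, g y != 0 -> exists2 e, blowup W h rho e & tle e y.
  move=> y; rewrite /g; case: asboolP => [[e He Hle] _|_]; [by exists e | by rewrite eqxx].
have le1 : (condenser_cap R (blowup W h rho) W <= sqnorm g)%E.
  by apply: ereal_inf_lbound; exists g.
have hge0 : (0 <= Cap R W)%E.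
  by rewrite -hcap /sqnorm; apply: esum_ge0 => x _; rewrite lee_fin sqr_ge0.
apply: le_trans le1 _.
have le2 : (sqnorm g <= (c ^+ 2)^-1%:E * sqnorm h)%E.
  rewrite /sqnorm -esum_pZl; last 2 first.
  - by rewrite invr_gt0 exprn_gt0.
  - by move=> x; rewrite lee_fin sqr_ge0.
  apply: le_esum => y _; rewrite -EFinM lee_fin /g.
  case: asboolP => _.
    by rewrite expr_div_n mulrC.
  by rewrite expr0n /= mulr_ge0 ?sqr_ge0 // invr_ge0 sqr_ge0.
apply: le_trans le2 _; rewrite hcap.
apply: lee_wpmul2r => //; rewrite lee_fin.
by rewrite ler_peMl // ?invr_ge0 ?sqr_ge0 // ler1n.
Qed.
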